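(* Let $R$ be a finite ring with identity. Then $R$ is a Carmichael ring if and only if $$R \cong \mathbb{F}_{q_1}\times\cdots\times\mathbb{F}_{q_k}$$ for some integer $k\ge 2$, where for each $1\le i\le k$, $\mathbb{F}_{q_i}$ is a finite field with $q_i$ elements and $q_i-1$ divides $|R|-1$.
   Context: A finite ring $R$ is called a Carmichael ring if $R$ is not a field and $a^{|R|}=a$ for every $a\in R$, where $|R|$ denotes the number of elements of $R$. *)

(* Defs.v *)
From HB Require Import structures.
From mathcomp Require Import all_boot all_order all_algebra.
Set Implicit Arguments. Unset Strict Implicit. Unset Printing Implicit Defensive.
Import GRing.Theory.
Local Open Scope ring_scope.

(* A ring is a field: commutative, and every nonzero element has a
   two-sided multiplicative inverse (1 != 0 is built into nzRingType). *)
Definition is_field (R : nzRingType) : Prop :=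
  (forall x y : R, x * y = y * x) /\
  (forall x : R, x != 0 -> exists y : R, y * x = 1 /\ x * y = 1).

Definition carmichael_ring (R : finNzRingType) : Prop :=
  ~ is_field R /\ forall a : R, a ^+ #|R| = a.

Definition ring_iso_prod (R : nzRingType) (k : nat) (F : 'I_k -> nzRingType)
  (f : R -> forall i : 'I_k, F i) : Prop :=
  bijective f /\
  (forall x y i, f (x + y) i = f x i + f y i) /\
  (forall x y i, f (x * y) i = f x i * f y i) /\
  (forall i, f 1 i = 1).

(* Main.v *)
Require Import Defs.
From HB Require Import structures.
From mathcomp Require Import all_boot all_order all_algebra.
From mathcomp Require Import fingroup finfield cyclic.
From Stdlib Require Import FunctionalExtensionality.
Set Implicit Arguments. Unset Strict Implicit. Unset Printing Implicit Defensive.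
Import GRing.Theory.
Local Open Scope ring_scope.

Section Corner.
Variables (R : finNzRingType) (e : R) (m : nat).
Hypotheses (eC : forall x, e * x = x * e) (ee : e * e = e) (e0 : e != 0)
  (ediv : forall x, x * e = x -> x != 0 -> x ^+ m.+1 = e).

Definition corner := {x : R | x * e == x}.
HB.instance Definition _ := Finite.on corner.

Let c0 : 0 * e == 0. Proof. by rewrite mul0r. Qed.
Let cD (x y : corner) : (val x + val y) * e == val x + val y.
Proof. by rewrite mulrDl (eqP (valP x)) (eqP (valP y)). Qed.
Let cN (x : corner) : (- val x) * e == - val x.
Proof. by rewrite mulNr (eqP (valP x)). Qed.
Let cM (x y : corner) : (val x * val y) * e == val x * val y.
Proof. by rewrite -mulrA (eqP (valP y)). Qed.
Let c1 : e * e == e. Proof. by rewrite ee. Qed.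

Definition czero : corner := exist (fun z : R => z * e == z) 0 c0.
Definition cadd (x y : corner) : corner := exist (fun z : R => z * e == z) _ (cD x y).
Definition copp (x : corner) : corner := exist (fun z : R => z * e == z) _ (cN x).
Definition cmul (x y : corner) : corner := exist (fun z : R => z * e == z) _ (cM x y).
Definition cone : corner := exist (fun z : R => z * e == z) _ c1.

Lemma caddA : associative cadd.
Proof. by move=> x y z; apply: val_inj; rewrite /= addrA. Qed.
Lemma caddC : commutative cadd.
Proof. by move=> x y; apply: val_inj; rewrite /= addrC. Qed.
Lemma cadd0 : left_id czero cadd.
Proof. by move=> x; apply: val_inj; rewrite /= add0r. Qed.
Lemma caddN : left_inverse czero copp cadd.
Proof. by move=> x; apply: val_inj; rewrite /= addNr. Qed.
HB.instance Definition _ := GRing.isZmodule.Build corner caddA caddC cadd0 caddN.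

Lemma cmulA : associative cmul.
Proof. by move=> x y z; apply: val_inj; rewrite /= mulrA. Qed.
Lemma cmul1 : left_id cone cmul.
Proof. by move=> x; apply: val_inj; rewrite /= eC (eqP (valP x)). Qed.
Lemma cmulr1 : right_id cone cmul.
Proof. by move=> x; apply: val_inj; rewrite /= (eqP (valP x)). Qed.
Lemma cmulDl : left_distributive cmul cadd.
Proof. by move=> x y z; apply: val_inj; rewrite /= mulrDl. Qed.
Lemma cmulDr : right_distributive cmul cadd.
Proof. by move=> x y z; apply: val_inj; rewrite /= mulrDr. Qed.
Lemma cone0 : cone != czero.
Proof. by apply/eqP => /(congr1 val) /= /eqP; rewrite (negPf e0). Qed.
HB.instance Definition _ := GRing.Zmodule_isNzRing.Build corner
  cmulA cmul1 cmulr1 cmulDl cmulDr cone0.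

Lemma cval0 : val (0 : corner) = 0. Proof. by []. Qed.
Lemma cval1 : val (1 : corner) = e. Proof. by []. Qed.
Lemma cvalM (x y : corner) : val (x * y) = val x * val y. Proof. by []. Qed.
Lemma cvalD (x y : corner) : val (x + y) = val x + val y. Proof. by []. Qed.

Let cI (x : corner) : (val x ^+ m * e) * e == val x ^+ m * e.
Proof. by rewrite -mulrA ee. Qed.
Definition cunit : pred corner := fun x => val x != 0.
Definition cinv (x : corner) : corner :=
  if val x == 0 then x else exist (fun z : R => z * e == z) _ (cI x).

Lemma cmulV : {in cunit, left_inverse 1 cinv *%R}.
Proof.
move=> x xu; apply: val_inj; rewrite /cinv (negPf xu) /=.
by rewrite -mulrA eC (eqP (valP x)) -exprSr ediv ?(eqP (valP x)).
Qed.
Lemma cdivrr : {in cunit, right_inverse 1 cinv *%R}.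
Proof.
move=> x xu; apply: val_inj; rewrite /cinv (negPf xu) /=.
by rewrite mulrA -exprS ediv ?(eqP (valP x)) // ee.
Qed.
Lemma cunitP : forall x y : corner, y * x = 1 /\ x * y = 1 -> cunit x.
Proof.
move=> x y [_ xy]; rewrite /cunit; apply/eqP => x0.
move: (congr1 val xy); rewrite cvalM x0 mul0r cval1 => /esym/eqP.
by rewrite (negPf e0).
Qed.
Lemma cinv_out : {in [predC cunit], cinv =1 id}.
Proof. by move=> x; rewrite inE /cunit /cinv negbK => ->. Qed.
HB.instance Definition _ := GRing.NzRing_hasMulInverse.Build corner
  cmulV cdivrr cunitP cinv_out.

Lemma corner_dom : GRing.integral_domain_axiom corner.
Proof.
move=> x y xy; case: (eqVneq x 0) => //= x0.
have xu : x \is a GRing.unit by [].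
by rewrite -(mulKr xu y) xy mulr0.
Qed.

HB.instance Definition _ := GRing.PzRing_hasCommutativeMul.Build corner
  (finDomain_mulrC corner_dom).
HB.instance Definition _ := GRing.ComUnitRing_isIntegral.Build corner corner_dom.
HB.instance Definition _ := GRing.UnitRing_isField.Build corner
  (finDomain_field corner_dom).
Definition cornerField : finFieldType := corner.

Definition cval (x : cornerField) : R := sval (x : corner).
Lemma cf_inj (x y : cornerField) : cval x = cval y -> x = y.
Proof. exact: (@val_inj _ _ corner x y). Qed.
Lemma fvalD (x y : cornerField) : cval (x + y) = cval x + cval y.
Proof. by []. Qed.
Lemma fvalM (x y : cornerField) : cval (x * y) = cval x * cval y.
Proof. by []. Qed.
Lemma fval1 : cval 1 = e.
Proof. by []. Qed.
Lemma fval0 : cval 0 = 0.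
Proof. by []. Qed.
Lemma fvalP (x : cornerField) : cval x * e = cval x.
Proof. exact: (eqP (valP (x : corner))). Qed.
Let pr x : x * e * e == x * e. Proof. by rewrite -mulrA ee. Qed.
Definition cproj (x : R) : cornerField :=
  (exist (fun z : R => z * e == z) (x * e) (pr x) : corner).
Lemma cprojE x : cval (cproj x) = x * e. Proof. by []. Qed.

Lemma fvalX (x : cornerField) k : cval (x ^+ k.+1) = cval x ^+ k.+1.
Proof.
elim: k => [|k IH]; first by rewrite !expr1.
by rewrite exprS fvalM IH -exprS.
Qed.

Lemma cf_pow (x : cornerField) : x != 0 -> x ^+ m.+1 = 1.
Proof.
move=> x0; apply: cf_inj; rewrite fvalX fval1; apply: ediv; first exact: fvalP.
by apply: contra x0 => /eqP x0; apply/eqP/cf_inj; rewrite x0 fval0.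
Qed.

Lemma commP (x y : R) : x * e * (y * e) = y * e * (x * e).
Proof. by rewrite -!cprojE -!fvalM mulrC. Qed.
End Corner.

Lemma ff_dvd (F : finFieldType) d :
  (forall x : F, x != 0 -> x ^+ d = 1) -> (#|F|.-1 %| d)%N.
Proof.
move=> H.
have /cyclicP [u Hu] := field_unit_group_cyclic [set: {unit F}]%G.
rewrite -card_finField_unit /= Hu -orderE order_dvdn.
apply/eqP/val_inj; rewrite FinRing.val_unitX H //.
by have := valP u; rewrite unitfE.
Qed.

Lemma ff_pow (F : finFieldType) d :
  (#|F|.-1 %| d)%N -> forall x : F, x ^+ d.+1 = x.
Proof.
move=> /dvdnP [c ->] x.
have [->|x0] := eqVneq x 0; first by rewrite expr0n.
have q1 : x ^+ #|F|.-1 = 1.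
  apply: (mulfI x0); rewrite mulr1 -exprS prednK ?expf_card //.
  by apply/card_gt0P; exists x.
by rewrite exprS mulnC exprM q1 expr1n mulr1.
Qed.
Section Carm.
Variables (R : finNzRingType) (m : nat).
Hypothesis H : forall a : R, a ^+ m.+2 = a.

Lemma red (a : R) : a * a = 0 -> a = 0.
Proof. by move=> aa; rewrite -(H a) !exprSr -mulrA aa mulr0. Qed.

Lemma idem_central (e x : R) : e * e = e -> e * x = x * e.
Proof.
move=> ee.
have h0 : (1 - e) * e = 0 by rewrite mulrBl mul1r ee subrr.
have h1 : e * (1 - e) = 0 by rewrite mulrBr mulr1 ee subrr.
have y0 : e * x * (1 - e) = 0.
  apply: red; transitivity (e * x * ((1 - e) * (e * x * (1 - e)))); first by rewrite !mulrA.
  have -> : (1 - e) * (e * x * (1 - e)) = 0 by rewrite !mulrA h0 !mul0r.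
  by rewrite mulr0.
have z0 : (1 - e) * x * e = 0.
  apply: red; transitivity ((1 - e) * x * (e * ((1 - e) * x * e))); first by rewrite !mulrA.
  have -> : e * ((1 - e) * x * e) = 0 by rewrite !mulrA h1 !mul0r.
  by rewrite mulr0.
move: y0 z0; rewrite mulrBr mulr1 mulrBl mul1r mulrBl => /subr0_eq -> /subr0_eq.
by rewrite -mulrA ee => ->.
Qed.

Lemma pow_idem (a : R) : a ^+ m.+1 * a ^+ m.+1 = a ^+ m.+1.
Proof. by rewrite -exprD addSnnS exprD H -exprSr. Qed.

Definition P : {set R} := [set e : R | (e * e == e) && (e != 0) &&
  [forall f : R, ((f * f == f) && (f * e == f)) ==> ((f == 0) || (f == e))]].

Lemma inP (e : R) : e \in P -> [/\ e * e = e, e != 0 &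
  forall f, f * f = f -> f * e = f -> f = 0 \/ f = e].
Proof.
rewrite inE => /andP [/andP [/eqP ee e0] /forallP Hf]; split => // f ff fe.
by move: (Hf f); rewrite ff fe !eqxx /= => /orP [/eqP|/eqP]; [left|right].
Qed.

Lemma orth (e f : R) : e \in P -> f \in P -> e != f -> e * f = 0.
Proof.
move=> /inP [ee e0 He] /inP [ff f0 Hf] ef.
have fe : f * e = e * f := idem_central e ff.
have ge : e * f * e = e * f by rewrite -mulrA fe mulrA ee.
have gg : e * f * (e * f) = e * f by rewrite mulrA ge -mulrA ff.
have gf : e * f * f = e * f by rewrite -mulrA ff.
case: (He _ gg ge) => // g1; case: (Hf _ gg gf) => // g2.
by rewrite -g1 g2 eqxx in ef.
Qed.

Lemma exists_prim (c : R) : c * c = c -> c != 0 -> exists2 p, p \in P & p * c = p.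
Proof.
move: {2}#|[pred x : R | x * c == x]| (leqnn #|[pred x : R | x * c == x]|) => k.
elim: k c => [|k IH] c.
  rewrite leqn0 => /eqP/card0_eq/(_ c) cc0 cc; move: cc0.
  by rewrite !inE cc eqxx.
move=> Hk cc c0.
case pc: (c \in P); first by exists c.
move: pc; rewrite inE cc eqxx c0 /= => /negbT /forallPn [f].
rewrite negb_imply => /andP [/andP [/eqP ff /eqP fc] /norP [f0 fc']].
have [|p pP pf] := IH f _ ff f0.
  rewrite -ltnS; apply: leq_trans Hk; apply: proper_card; apply/properP; split.
    by apply/subsetP => x; rewrite !inE => /eqP xf; rewrite -xf -mulrA fc.
  exists c; first by rewrite inE cc.
  by rewrite inE -(idem_central c ff) fc.
by exists p => //; rewrite -pf -mulrA fc.
Qed.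

Lemma sumP : \sum_(e in P) e = 1.
Proof.
have ps p : p \in P -> p * \sum_(e in P) e = p.
  move=> pP; rewrite mulr_sumr (bigD1 p) //= big1 ?addr0.
    by case/inP: pP.
  by move=> e /andP [eP ep]; apply: orth; rewrite // eq_sym.
set s := \sum_(e in P) e.
have ss : s * s = s.
  rewrite {2}/s mulr_sumr; apply: eq_bigr => e eP.
  by rewrite -(idem_central _ (let: And3 h _ _ := inP eP in h)) ps.
have cc : (1 - s) * (1 - s) = 1 - s.
  by rewrite mulrBl mul1r mulrBr mulr1 ss subrr subr0.
have [c0|c0] := eqVneq (1 - s) 0; first by rewrite (subr0_eq c0).
have [p pP pc] := exists_prim cc c0.
case/inP: (pP) => _ p0 _.
by move: pc; rewrite mulrBr mulr1 ps // subrr => /esym/eqP; rewrite (negPf p0).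
Qed.

Lemma divP (p x : R) : p \in P -> x * p = x -> x != 0 -> x ^+ m.+1 = p.
Proof.
move=> /inP [pp p0 Hp] xp x0.
have g0 : x ^+ m.+1 != 0.
  by apply: contraNneq x0 => g0; rewrite -(H x) exprSr g0 mul0r.
have gp : x ^+ m.+1 * p = x ^+ m.+1 by rewrite exprSr -mulrA xp.
by case: (Hp _ (pow_idem x) gp) => // g; rewrite g eqxx in g0.
Qed.
End Carm.

Lemma PC (R : finNzRingType) m (H : forall a : R, a ^+ m.+2 = a) e :
  e \in P R -> forall x, e * x = x * e.
Proof. by move=> /inP [ee _ _] x; exact: (idem_central H x ee). Qed.
Lemma Pee (R : finNzRingType) (e : R) : e \in P R -> e * e = e.
Proof. by case/inP. Qed.
Lemma P0 (R : finNzRingType) (e : R) : e \in P R -> e != 0.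
Proof. by case/inP. Qed.


Section Fam.
Variables (R : finNzRingType) (m : nat) (H : forall a : R, a ^+ m.+2 = a).
Definition ep (i : 'I_#|P R|) : R := enum_val i.
Lemma epP i : ep i \in P R. Proof. exact: enum_valP. Qed.
Definition Fam (i : 'I_#|P R|) : finFieldType :=
  @cornerField R (ep i) m (PC H (epP i)) (Pee (epP i)) (P0 (epP i))
    (fun z => divP H (x := z) (epP i)).
Definition fam (x : R) : forall i, Fam i := fun i =>
  @cproj R (ep i) m (PC H (epP i)) (Pee (epP i)) (P0 (epP i))
    (fun z => divP H (x := z) (epP i)) x.
Definition fv i (y : Fam i) : R :=
  @cval R (ep i) m (PC H (epP i)) (Pee (epP i)) (P0 (epP i))
    (fun z => divP H (x := z) (epP i)) y.
Lemma famE x i : fv (fam x i) = x * ep i.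
Proof.
exact (@cprojE R (ep i) m (PC H (epP i)) (Pee (epP i)) (P0 (epP i))
    (fun z => divP H (x := z) (epP i)) x).
Qed.
Lemma fv_inj i (y z : Fam i) : fv y = fv z -> y = z.
Proof.
exact (@cf_inj R (ep i) m (PC H (epP i)) (Pee (epP i)) (P0 (epP i))
    (fun z => divP H (x := z) (epP i)) y z).
Qed.
Lemma fvD i (y z : Fam i) : fv (y + z) = fv y + fv z.
Proof.
exact (@fvalD R (ep i) m (PC H (epP i)) (Pee (epP i)) (P0 (epP i))
    (fun z => divP H (x := z) (epP i)) y z).
Qed.
Lemma fvM i (y z : Fam i) : fv (y * z) = fv y * fv z.
Proof.
exact (@fvalM R (ep i) m (PC H (epP i)) (Pee (epP i)) (P0 (epP i))
    (fun z => divP H (x := z) (epP i)) y z).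
Qed.
Lemma fv1 i : fv (1 : Fam i) = ep i.
Proof.
exact (@fval1 R (ep i) m (PC H (epP i)) (Pee (epP i)) (P0 (epP i))
    (fun z => divP H (x := z) (epP i))).
Qed.
Lemma fvP i (y : Fam i) : fv y * ep i = fv y.
Proof.
exact (@fvalP R (ep i) m (PC H (epP i)) (Pee (epP i)) (P0 (epP i))
    (fun z => divP H (x := z) (epP i)) y).
Qed.
Lemma Fam_pow i (y : Fam i) : y != 0 -> y ^+ m.+1 = 1.
Proof.
exact (@cf_pow R (ep i) m (PC H (epP i)) (Pee (epP i)) (P0 (epP i))
    (fun z => divP H (x := z) (epP i)) y).
Qed.
End Fam.

Theorem theorem2p1 (R : finNzRingType) :
  carmichael_ring R <->
  exists (k : nat) (F : 'I_k -> finFieldType) (f : R -> forall i : 'I_k, F i),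
    (2 <= k)%N /\ @ring_iso_prod R k (fun i => F i : nzRingType) f /\
    (forall i : 'I_k, (#|F i|.-1 %| #|R|.-1)%N).
Proof.
split.
- case=> nf Hc.
  have [m Hm] : exists m, #|R| = m.+2.
    have : (1 < #|R|)%N.
      by apply/card_gt1P; exists 0, 1; rewrite !inE eq_sym oner_neq0.
    by case: #|R| => [|[|m]] //; exists m.
  have H : forall a : R, a ^+ m.+2 = a by move=> a; rewrite -Hm.
  have k2 : (2 <= #|P R|)%N.
    case E: #|P R| => [|[|k']] //.
      have := sumP H; rewrite big_pred0 => [/eqP|x]; last by rewrite (card0_eq E).
      by rewrite eq_sym oner_eq0.
    move/eqP/cards1P: E => [p Ep].
    have pP : p \in P R by rewrite Ep set11.
    have := sumP H; rewrite Ep big_set1 => p1; subst p.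
    exfalso; apply: nf; split.
      move=> x y.
      have := @commP R 1 m (PC H pP) (Pee pP) (P0 pP) (fun z => divP H (x := z) pP) x y.
      by rewrite !mulr1.
    move=> x x0; have xm := divP H pP (mulr1 x) x0.
    by exists (x ^+ m); rewrite -exprSr -exprS xm.
  exists #|P R|, (Fam H), (fam H).
  have sumk : \sum_(i < #|P R|) ep i = 1.
    by rewrite -(sumP H) (big_enum_val (fun e : R => e)).
  have orthk (i j : 'I_#|P R|) : i != j -> ep i * ep j = 0.
    move=> ij; have nij : ep i != ep j.
      by apply: contra ij => /eqP /enum_val_inj ->.
    exact: (orth H (epP i) (epP j) nij).
  split; first exact: k2.
  split; last first.
    move=> i; apply: (@ff_dvd (Fam H i) #|R|.-1) => x x0.
    rewrite Hm; exact: Fam_pow.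
  split.
    exists (fun y => \sum_(i < #|P R|) fv (y i)).
      by move=> x; under eq_bigr do rewrite famE; rewrite -mulr_sumr sumk mulr1.
    move=> y; apply: functional_extensionality_dep => i; apply: fv_inj.
    rewrite famE mulr_suml (bigD1 i) //= fvP big1 ?addr0 //.
    move=> j ji; rewrite -(fvP (y j)) -mulrA orthk ?mulr0 //.
  split; first by move=> x y i; apply: fv_inj; rewrite fvD !famE mulrDl.
  split; last by move=> i; apply: fv_inj; rewrite fv1 famE mul1r.
  move=> x y i; apply: fv_inj; rewrite fvM !famE.
  have ce := PC H (epP i) y; have ee := Pee (epP i).
  transitivity (x * y * (ep i * ep i)); first by rewrite ee.
  by rewrite !mulrA -[x * ep i * y]mulrA ce mulrA.
- case=> k [F [f [k2 [[bij [fD [fM f1]]] dv]]]].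
  have f0 i : f 0 i = 0 by apply: (@addrI _ (f 0 i)); rewrite -fD !addr0.
  have fX a j i : f (a ^+ j) i = f a i ^+ j.
    by elim: j => [|j IH]; rewrite ?expr0 ?f1 // !exprS fM IH.
  split.
    move=> [Hcomm Hinv].
    pose i0 : 'I_k := Ordinal (ltnW k2).
    pose i1 : 'I_k := Ordinal k2.
    have [g fg gf] := bij.
    pose b : forall i, F i := fun i => if i == i0 then 1 else 0.
    have fa : f (g b) = b := gf b.
    have a0 : g b != 0.
      apply/eqP => a0; have := congr1 (fun h => h i0) fa.
      by rewrite a0 f0 /b eqxx => /eqP; rewrite eq_sym oner_eq0.
    case: (Hinv _ a0) => y [ya _].
    have := f1 i1; rewrite -ya fM fa /b /= mulr0 => /eqP.
    by rewrite eq_sym oner_eq0.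
  move=> a; apply: (bij_inj bij); apply: functional_extensionality_dep => i.
  rewrite fX.
  have n1 : #|R| = #|R|.-1.+1 by rewrite prednK //; apply/card_gt0P; exists 0.
  by rewrite n1; apply: ff_pow.
Qed.
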